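(* Let $q>0$ be real and let $\mathfrak{M}^{\rm I}_q\subset\widetilde{SL}(2)_q$ and the involution $\dagger$ be as in the context. Let $U$ be a finite-dimensional Hermitian vector space with inner product $(\cdot,\cdot)$, conjugate linear in the first argument, and define the pairing $(\cdot,\cdot):(U\otimes\mathfrak{M}^{\rm I}_q)\times(U\otimes\mathfrak{M}^{\rm I}_q)\to\mathfrak{M}^{\rm I}_q$ by $(v_1\otimes f_1,v_2\otimes f_2)=(v_1,v_2)\,f_1^\dagger f_2$, extended additively. Then for $\sigma\in U\otimes\mathfrak{M}^{\rm I}_q$ we have $(\sigma,\sigma)=0$ if and only if $\sigma=0$.
   Context: $SL(2)_q$ is the unital associative $\mathbb{C}$-algebra generated by $g_{11'},g_{12'},g_{21'},g_{22'}$ with relations $g_{11'}g_{12'}=q^{-1}g_{12'}g_{11'}$, $g_{11'}g_{21'}=q^{-1}g_{21'}g_{11'}$, $g_{12'}g_{22'}=q^{-1}g_{22'}g_{12'}$, $g_{21'}g_{22'}=q^{-1}g_{22'}g_{21'}$, $g_{12'}g_{21'}=g_{21'}g_{12'}$, and $g_{11'}g_{22'}-q^{-1}g_{12'}g_{21'}=g_{22'}g_{11'}-qg_{21'}g_{12'}=1$. The algebra $\widetilde{SL}(2)_q$ is obtained by adjoining an invertible generator $\delta$ with $\delta g_{11'}=g_{11'}\delta$, $\delta g_{12'}=qg_{12'}\delta$, $\delta g_{21'}=q^{-1}g_{21'}\delta$, $\delta g_{22'}=g_{22'}\delta$. The involution $\dagger$ is the conjugate-linear anti-automorphism of $\widetilde{SL}(2)_q$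 with $g_{11'}^\dagger=g_{22'}$, $g_{12'}^\dagger=-g_{21'}$, $g_{21'}^\dagger=-g_{12'}$, $g_{22'}^\dagger=g_{11'}$, $\delta^\dagger=\delta$. Set $x_{11'}=\delta g_{11'}$, $x_{12'}=q^{-1/2}\delta g_{12'}$, $x_{21'}=q^{1/2}\delta g_{21'}$, $x_{22'}=\delta g_{22'}$, and let $\mathfrak{M}^{\rm I}_q$ be the subalgebra generated by these four elements (the quantum affine Minkowski space). It satisfies $x_{11'}x_{12'}=x_{12'}x_{11'}$, $x_{21'}x_{22'}=x_{22'}x_{21'}$, $[x_{11'},x_{22'}]+[x_{21'},x_{12'}]=0$, $x_{11'}x_{21'}=q^{-2}x_{21'}x_{11'}$, $x_{12'}x_{22'}=q^{-2}x_{22'}x_{12'}$, $x_{21'}x_{12'}=q^2x_{12'}x_{21'}$, and is preserved by $\dagger$: $x_{11'}^\dagger=x_{22'}$, $x_{12'}^\dagger=-x_{21'}$, $x_{21'}^\dagger=-x_{12'}$, $x_{22'}^\dagger=x_{11'}$. *)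

(* Defs.v *)
From HB Require Import structures.
From mathcomp Require Import all_boot all_order all_algebra.
From mathcomp Require Import reals complex.
Set Implicit Arguments. Unset Strict Implicit. Unset Printing Implicit Defensive.
Import Order.TTheory GRing.Theory Num.Theory.
Local Open Scope ring_scope.
Local Open Scope complex_scope.

Inductive gen := G11 | G12 | G21 | G22 | Dl | Dli.

Definition gen_to_nat (g : gen) : nat :=
  match g with G11 => 0 | G12 => 1 | G21 => 2 | G22 => 3 | Dl => 4 | Dli => 5 end.
Definition nat_to_gen (n : nat) : gen :=
  match n with 0 => G11 | 1 => G12 | 2 => G21 | 3 => G22 | 4 => Dl | _ => Dli end.
Lemma gen_natK : cancel gen_to_nat nat_to_gen. Proof. by case. Qed.
HB.instance Definition _ := Equality.copy gen (can_type gen_natK).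

Section FreeAlgebra.
Variable R : realType.
Local Notation C := (R[i]).

(* Elements of the free associative C-algebra on [gen], represented by
   formal finite linear combinations of words (lists of (coefficient, word)). *)
Definition fpoly := seq (C * seq gen).

Definition coef (p : fpoly) (w : seq gen) : C :=
  \sum_(t <- p) (if t.2 == w then t.1 else 0).

Definition addp (p r : fpoly) : fpoly := p ++ r.
Definition scalep (c : C) (p : fpoly) : fpoly := [seq (c * t.1, t.2) | t <- p].
Definition subp (p r : fpoly) : fpoly := p ++ scalep (-1) r.
Definition mulp (p r : fpoly) : fpoly :=
  [seq (a.1 * b.1, a.2 ++ b.2) | a <- p, b <- r].
Definition onep : fpoly := [:: (1, [::])].
Definition genp (g : gen) : fpoly := [:: (1, [:: g])].
Definition prodp (s : seq fpoly) : fpoly := foldr mulp onep s.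

(* defining relations of SL~(2)_q, each written as  lhs - rhs *)
Definition rels (q : R) : seq fpoly :=
  let qC : C := q%:C in
  let m a b := mulp (genp a) (genp b) in
  [:: subp (m G11 G12) (scalep qC^-1 (m G12 G11));
      subp (m G11 G21) (scalep qC^-1 (m G21 G11));
      subp (m G12 G22) (scalep qC^-1 (m G22 G12));
      subp (m G21 G22) (scalep qC^-1 (m G22 G21));
      subp (m G12 G21) (m G21 G12);
      subp (subp (m G11 G22) (scalep qC^-1 (m G12 G21))) onep;
      subp (subp (m G22 G11) (scalep qC (m G21 G12))) onep;
      subp (m Dl G11) (m G11 Dl);
      subp (m Dl G12) (scalep qC (m G12 Dl));
      subp (m Dl G21) (scalep qC^-1 (m G21 Dl));
      subp (m Dl G22) (m G22 Dl);
      subp (m Dl Dli) onep;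
      subp (m Dli Dl) onep ].

Definition in_rel_ideal (q : R) (p : fpoly) : Prop :=
  exists s : seq (fpoly * nat * fpoly),
    forall w, coef p w =
      coef (flatten [seq mulp (mulp t.1.1 (nth [::] (rels q) t.1.2)) t.2 | t <- s]) w.

(* equality in the quotient algebra SL~(2)_q *)
Definition aeq (q : R) (p r : fpoly) : Prop := in_rel_ideal q (subp p r).

(* the involution dagger: conjugate-linear anti-automorphism determined by
   g11^+ = g22, g12^+ = -g21, g21^+ = -g12, g22^+ = g11, delta^+ = delta
   (hence (delta^{-1})^+ = delta^{-1}) *)
Definition gdag (g : gen) : gen :=
  match g with G11 => G22 | G12 => G21 | G21 => G12 | G22 => G11 | Dl => Dl | Dli => Dli end.
Definition gsign (g : gen) : bool :=
  match g with G12 | G21 => true | _ => false end.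
Definition dagger (p : fpoly) : fpoly :=
  [seq ((-1) ^+ count gsign t.2 * (t.1)^*, rev (map gdag t.2)) | t <- p].

(* generators x_{11'}, x_{12'}, x_{21'}, x_{22'} of the quantum affine Minkowski space,
   indexed by 'I_4 in the order 11', 12', 21', 22' *)
Definition xgen (q : R) (k : 'I_4) : fpoly :=
  let s : C := (Num.sqrt q)%:C in
  match val k with
  | 0 => mulp (genp Dl) (genp G11)
  | 1 => scalep s^-1 (mulp (genp Dl) (genp G12))
  | 2 => scalep s (mulp (genp Dl) (genp G21))
  | _ => mulp (genp Dl) (genp G22)
  end.

(* noncommutative polynomials in x_{11'},...,x_{22'}; every element of M^I_q is
   (the class of) [xembed q p] for some such p *)
Definition xpoly := seq (C * seq 'I_4).
Definition xembed (q : R) (p : xpoly) : fpoly :=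
  flatten [seq scalep t.1 (prodp (map (xgen q) t.2)) | t <- p].

Definition hermitian_inner_product (U : lmodType C) (form : U -> U -> C) : Prop :=
  [/\ forall a u v w, form (a *: u + v) w = a^* * form u w + form v w,
      forall a u v w, form u (a *: v + w) = a * form u v + form u w,
      forall u v, form v u = (form u v)^*
    & forall u, u != 0 -> 0 < form u u].

(* sigma = sum_k u_k (x) f_k in U (x) M^I_q, given as the list of pairs (u_k, f_k) *)
Definition tpair (q : R) (U : lmodType C) (form : U -> U -> C)
    (sigma : seq (U * xpoly)) : fpoly :=
  flatten [seq mulp (scalep (form a.1 b.1) (dagger (xembed q a.2))) (xembed q b.2)
          | a <- sigma, b <- sigma].

(* sigma = 0 in U (x) M^I_q : all contractions with linear functionals on U vanish *)
Definition tensor_zero (q : R) (U : lmodType C) (sigma : seq (U * xpoly)) : Prop :=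
  forall phi : {linear U -> C^o},
    aeq q (flatten [seq scalep (phi t.1) (xembed q t.2) | t <- sigma]) [::].

End FreeAlgebra.

(* Main.v *)
Require Import Defs.
From HB Require Import structures.
From mathcomp Require Import all_boot all_order all_algebra.
From mathcomp Require Import reals complex.
From mathcomp Require Import ring lra zify.
From Stdlib Require Import FunctionalExtensionality.
Import Order.TTheory GRing.Theory Num.Theory.
Set Implicit Arguments. Unset Strict Implicit. Unset Printing Implicit Defensive.
Local Open Scope ring_scope.
Local Open Scope complex_scope.

(* Proof strategy:
   (<-) direct: the pairing is a sum of left multiples of contractions.
   (->) reduce every element of M^I_q to ordered (PBW) monomials modulo the ideal,
        then apply a linear functional killing the ideal, obtained from an explicit
        representation of SL~(2)_q on functions Z^4 -> C, which detects a
        sign-definite "diagonal" coefficient of (sigma,sigma). *)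

Section Coef.
Variable R : realType.
Local Notation C := (R[i]).

Definition ceq (p r : fpoly R) := forall w, coef p w = coef r w.

Lemma coef_nil w : coef ([::] : fpoly R) w = 0.
Proof. by rewrite /coef big_nil. Qed.

Lemma coef_cons t (p : fpoly R) w :
  coef (t :: p) w = (if t.2 == w then t.1 else 0) + coef p w.
Proof. by rewrite /coef big_cons. Qed.

Lemma coef_cat (p r : fpoly R) w : coef (p ++ r) w = coef p w + coef r w.
Proof. by rewrite /coef big_cat. Qed.

Lemma coef_scale c (p : fpoly R) w : coef (scalep c p) w = c * coef p w.
Proof.
rewrite /coef /scalep big_map mulr_sumr; apply: eq_bigr => t _ /=.
by case: ifP; rewrite ?mulr0.
Qed.

Lemma coef_flatten (l : seq (fpoly R)) w :
  coef (flatten l) w = \sum_(x <- l) coef x w.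
Proof. by rewrite /coef big_flatten. Qed.

Lemma coef_mul (p r : fpoly R) w :
  coef (mulp p r) w =
  \sum_(a <- p) \sum_(b <- r) (if a.2 ++ b.2 == w then a.1 * b.1 else 0).
Proof. by rewrite /coef /mulp big_allpairs_dep. Qed.

Lemma sum_group (V : zmodType) (p : fpoly R) (F : C -> seq gen -> V)
  (S : seq (seq gen)) :
  (forall w, {morph F^~ w : x y / x + y}) -> (forall w, F 0 w = 0) ->
  uniq S -> {subset map snd p <= S} ->
  \sum_(a <- p) F a.1 a.2 = \sum_(w <- S) F (coef p w) w.
Proof.
move=> FD F0 uS sub.
have Fs : forall w (s : seq (C * seq gen)) (G : C * seq gen -> C),
    F (\sum_(x <- s) G x) w = \sum_(x <- s) F (G x) w.
  move=> w s G; elim: s => [|x s IH]; first by rewrite !big_nil F0.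
  by rewrite !big_cons FD IH.
transitivity (\sum_(w <- S) \sum_(a <- p) F (if a.2 == w then a.1 else 0) w); last first.
  by apply: eq_bigr => w _; rewrite /coef Fs.
rewrite exchange_big /= [RHS]big_seq [LHS]big_seq; apply: eq_bigr => a ap.
have aS : a.2 \in S by apply: sub; apply: map_f.
rewrite (bigD1_seq a.2) //= eqxx big1 ?addr0 // => w /negbTE nw.
by rewrite eq_sym nw F0.
Qed.

Lemma sum_ceq (V : zmodType) (p p' : fpoly R) (F : C -> seq gen -> V) :
  (forall w, {morph F^~ w : x y / x + y}) -> (forall w, F 0 w = 0) ->
  ceq p p' -> \sum_(a <- p) F a.1 a.2 = \sum_(a <- p') F a.1 a.2.
Proof.
move=> FD F0 e.
have u := undup_uniq (map snd (p ++ p')).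
rewrite (sum_group FD F0 u) ?(sum_group FD F0 u (p := p')).
  by apply: eq_bigr => w _; rewrite e.
all: by move=> x xi; rewrite mem_undup map_cat mem_cat xi ?orbT.
Qed.

Lemma sum_ceq_mul (V : lmodType C) (p p' : fpoly R) (G : seq gen -> V) :
  ceq p p' -> \sum_(a <- p) a.1 *: G a.2 = \sum_(a <- p') a.1 *: G a.2.
Proof.
by apply: (sum_ceq (F := fun c w => c *: G w)) => [w x y|w]; rewrite ?scalerDl ?scale0r.
Qed.

Lemma ceq_refl p : ceq p p. Proof. by []. Qed.
Lemma ceq_sym p r : ceq p r -> ceq r p. Proof. by move=> e w; rewrite e. Qed.
Lemma ceq_trans p r s : ceq p r -> ceq r s -> ceq p s.
Proof. by move=> e1 e2 w; rewrite e1 e2. Qed.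

Lemma ceq_cat p p' r r' : ceq p p' -> ceq r r' -> ceq (p ++ r) (p' ++ r').
Proof. by move=> e1 e2 w; rewrite !coef_cat e1 e2. Qed.

Lemma ceq_scale c p p' : ceq p p' -> ceq (scalep c p) (scalep c p').
Proof. by move=> e w; rewrite !coef_scale e. Qed.

Lemma coef_mul_l (p r : fpoly R) w :
  coef (mulp p r) w = \sum_(a <- p) a.1 *: (\sum_(b <- r) (if a.2 ++ b.2 == w then b.1 else 0) : C^o).
Proof.
rewrite coef_mul; apply: eq_bigr => a _; rewrite scaler_sumr; apply: eq_bigr => b _.
by case: ifP; rewrite ?scaler0.
Qed.

Lemma coef_mul_r (p r : fpoly R) w :
  coef (mulp p r) w = \sum_(b <- r) b.1 *: (\sum_(a <- p) (if a.2 ++ b.2 == w then a.1 else 0) : C^o).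
Proof.
rewrite coef_mul exchange_big /=; apply: eq_bigr => b _; rewrite scaler_sumr; apply: eq_bigr => a _.
by case: ifP; rewrite ?scaler0 // /GRing.scale /= mulrC.
Qed.

Lemma ceq_mul p p' r r' : ceq p p' -> ceq r r' -> ceq (mulp p r) (mulp p' r').
Proof.
move=> e1 e2 w; rewrite coef_mul_l.
rewrite (sum_ceq_mul (fun u => (\sum_(b <- r) (if u ++ b.2 == w then b.1 else 0) : C^o)) e1) -!coef_mul_l.
rewrite !coef_mul_r.
by rewrite (sum_ceq_mul (fun u => (\sum_(a <- p') (if a.2 ++ u == w then a.1 else 0) : C^o)) e2).
Qed.

Lemma ceq_mulA p r s : ceq (mulp (mulp p r) s) (mulp p (mulp r s)).
Proof.
move=> w; rewrite coef_mul /mulp big_allpairs_dep /= coef_mul.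
apply: eq_bigr => a _; rewrite big_allpairs_dep /=.
rewrite [RHS]exchange_big /=. rewrite exchange_big /=.
apply: eq_bigr => b _; apply: eq_bigr => c _.
by rewrite catA mulrA.
Qed.

Lemma ceq_mul_flatten_r p l : ceq (mulp p (flatten l)) (flatten (map (mulp p) l)).
Proof.
move=> w; rewrite coef_flatten big_map coef_mul.
rewrite exchange_big big_flatten /=; apply: eq_bigr => r _.
by rewrite coef_mul exchange_big.
Qed.

Lemma ceq_mul_flatten_l p l : ceq (mulp (flatten l) p) (flatten (map (fun x => mulp x p) l)).
Proof.
move=> w; rewrite coef_flatten big_map coef_mul big_flatten /=.
by apply: eq_bigr => r _; rewrite coef_mul.
Qed.

Lemma ceq_mul_scale_l c p r : ceq (mulp (scalep c p) r) (scalep c (mulp p r)).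
Proof.
move=> w; rewrite coef_scale !coef_mul /scalep big_map mulr_sumr.
apply: eq_bigr => a _; rewrite mulr_sumr; apply: eq_bigr => b _ /=.
by case: ifP; rewrite ?mulr0 ?mulrA.
Qed.

Lemma ceq_mul_scale_r c p r : ceq (mulp p (scalep c r)) (scalep c (mulp p r)).
Proof.
move=> w; rewrite coef_scale !coef_mul mulr_sumr.
apply: eq_bigr => a _; rewrite /scalep big_map mulr_sumr; apply: eq_bigr => b _ /=.
by case: ifP; rewrite ?mulr0 // mulrCA.
Qed.

Lemma ceq_mul_cat_l p p' r : ceq (mulp (p ++ p') r) (mulp p r ++ mulp p' r).
Proof. by move=> w; rewrite coef_cat !coef_mul big_cat. Qed.

Lemma ceq_mul_cat_r p r r' : ceq (mulp p (r ++ r')) (mulp p r ++ mulp p r').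
Proof.
move=> w; rewrite coef_cat !coef_mul -big_split; apply: eq_bigr => a _.
by rewrite big_cat.
Qed.

Lemma ceq_one_l p : ceq (mulp (onep R) p) p.
Proof.
move=> w; rewrite coef_mul big_cons big_nil addr0 /coef; apply: eq_bigr => b _ /=.
by rewrite mul1r.
Qed.

Lemma ceq_one_r p : ceq (mulp p (onep R)) p.
Proof.
move=> w; rewrite coef_mul /coef; apply: eq_bigr => b _ /=.
by rewrite big_cons big_nil addr0 cats0 mulr1.
Qed.

End Coef.

Section Ideal.
Variable R : realType.
Local Notation C := (R[i]).
Variable q : R.
Implicit Types (p r a : fpoly R).

Definition inI (p : fpoly R) := in_rel_ideal q p.

Definition witp (s : seq (fpoly R * nat * fpoly R)) : fpoly R :=
  flatten [seq mulp (mulp t.1.1 (nth [::] (rels q) t.1.2)) t.2 | t <- s].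

Lemma inIP p : inI p <-> exists s, ceq p (witp s).
Proof. by []. Qed.

Lemma inI_ceq p r : ceq p r -> inI r -> inI p.
Proof. by move=> e [s hs]; exists s => w; rewrite e hs. Qed.

Lemma inI_zero p : (forall w, coef p w = 0) -> inI p.
Proof. by move=> h; exists [::] => w; rewrite h /= coef_nil. Qed.

Lemma inI_cat p r : inI p -> inI r -> inI (p ++ r).
Proof.
move=> [s1 h1] [s2 h2]; exists (s1 ++ s2) => w.
by rewrite coef_cat h1 h2 map_cat flatten_cat coef_cat.
Qed.

Lemma witp_cat s1 s2 : ceq (witp (s1 ++ s2)) (witp s1 ++ witp s2).
Proof. by move=> w; rewrite /witp map_cat flatten_cat. Qed.

Lemma inI_scale c p : inI p -> inI (scalep c p).
Proof.
move=> [s h]; exists [seq (scalep c t.1.1, t.1.2, t.2) | t <- s] => w.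
rewrite coef_scale h /witp !coef_flatten !big_map mulr_sumr; apply: eq_bigr => t _ /=.
rewrite -coef_scale; apply: ceq_sym.
apply: ceq_trans; first by apply: ceq_mul; [apply: ceq_mul_scale_l| apply: ceq_refl].
exact: ceq_mul_scale_l.
Qed.

Lemma inI_mull a p : inI p -> inI (mulp a p).
Proof.
move=> [s h]; exists [seq (mulp a t.1.1, t.1.2, t.2) | t <- s].
apply: ceq_trans; first by apply: ceq_mul; [apply: ceq_refl| exact: h].
apply: ceq_trans; first exact: ceq_mul_flatten_r.
move=> w; rewrite /witp !coef_flatten !big_map; apply: eq_bigr => t _ /=.
apply: ceq_sym; apply: ceq_trans; first by apply: ceq_mul; [apply: ceq_mulA| apply: ceq_refl].
exact: ceq_mulA.
Qed.

Lemma inI_mulr a p : inI p -> inI (mulp p a).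
Proof.
move=> [s h]; exists [seq (t.1.1, t.1.2, mulp t.2 a) | t <- s].
apply: ceq_trans; first by apply: ceq_mul; [exact: h| apply: ceq_refl].
apply: ceq_trans; first exact: ceq_mul_flatten_l.
move=> w; rewrite /witp !coef_flatten !big_map; apply: eq_bigr => t _ /=.
exact: ceq_mulA.
Qed.

Lemma inI_rel i : inI (nth [::] (rels q) i).
Proof.
exists [:: (@onep R, i, @onep R)] => w.
rewrite /witp /= cats0; apply: ceq_sym; apply: ceq_trans; first exact: ceq_one_r.
exact: ceq_one_l.
Qed.

Lemma coef_sub p r w : coef (subp p r) w = coef p w - coef r w.
Proof. by rewrite /subp coef_cat coef_scale mulN1r. Qed.

Lemma aeqE p r : aeq q p r = inI (subp p r). Proof. by []. Qed.

Lemma aeq_ceq p r : ceq p r -> aeq q p r.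
Proof. by move=> e; apply: inI_zero => w; rewrite coef_sub e subrr. Qed.

Lemma aeq_refl p : aeq q p p. Proof. exact: aeq_ceq. Qed.

Lemma aeq_sym p r : aeq q p r -> aeq q r p.
Proof.
move=> h; apply: (inI_ceq (r := scalep (-1) (subp p r))); last exact: inI_scale.
by move=> w; rewrite coef_scale !coef_sub; ring.
Qed.

Lemma aeq_trans p r (s : fpoly R) : aeq q p r -> aeq q r s -> aeq q p s.
Proof.
move=> h1 h2; apply: (inI_ceq (r := subp p r ++ subp r s)); last exact: inI_cat.
by move=> w; rewrite coef_cat !coef_sub; ring.
Qed.

Lemma aeq_cat p (p' : fpoly R) r (r' : fpoly R) : aeq q p p' -> aeq q r r' -> aeq q (p ++ r) (p' ++ r').
Proof.
move=> h1 h2; apply: (inI_ceq (r := subp p p' ++ subp r r')); last exact: inI_cat.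
by move=> w; rewrite coef_cat !coef_sub !coef_cat; ring.
Qed.

Lemma aeq_scale c p (p' : fpoly R) : aeq q p p' -> aeq q (scalep c p) (scalep c p').
Proof.
move=> h; apply: (inI_ceq (r := scalep c (subp p p'))); last exact: inI_scale.
by move=> w; rewrite coef_scale !coef_sub !coef_scale; ring.
Qed.

Lemma aeq_mull a p (p' : fpoly R) : aeq q p p' -> aeq q (mulp a p) (mulp a p').
Proof.
move=> h; apply: (inI_ceq (r := mulp a (subp p p'))); last exact: inI_mull.
move=> w; rewrite coef_sub ceq_mul_cat_r coef_cat ceq_mul_scale_r coef_scale.
by rewrite mulN1r.
Qed.

Lemma aeq_mulr a p (p' : fpoly R) : aeq q p p' -> aeq q (mulp p a) (mulp p' a).
Proof.
move=> h; apply: (inI_ceq (r := mulp (subp p p') a)); last exact: inI_mulr.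
move=> w; rewrite coef_sub ceq_mul_cat_l coef_cat ceq_mul_scale_l coef_scale.
by rewrite mulN1r.
Qed.

Lemma aeq_ceql p (p' : fpoly R) r : ceq p p' -> aeq q p' r -> aeq q p r.
Proof. by move=> e; apply: aeq_trans; apply: aeq_ceq. Qed.

Lemma aeq_ceqr p r (r' : fpoly R) : ceq r r' -> aeq q p r' -> aeq q p r.
Proof. by move=> e h; apply: aeq_trans h _; apply: aeq_ceq; apply: ceq_sym. Qed.

Lemma aeq_inI p : aeq q p [::] <-> inI p.
Proof.
split=> h; apply: inI_ceq h => w; by rewrite coef_sub coef_nil subr0.
Qed.
End Ideal.


Section Rep.
Variable R : realType.
Local Notation C := (R[i]).
Variable q : R.
Hypothesis hq : 0 < q.
Implicit Types (p r : fpoly R).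

Definition Fn := int -> int -> int -> int -> C.
Definition qC : C := q%:C.
Definition qz (z : int) : C := qC ^ z.

Lemma qC_gt0 : 0 < qC. Proof. by rewrite /qC ltcR. Qed.
Lemma qC_neq0 : qC != 0. Proof. by rewrite gt_eqF // qC_gt0. Qed.
Lemma qzD x y : qz (x + y) = qz x * qz y. Proof. by rewrite /qz expfzDr // qC_neq0. Qed.
Lemma qzN x : qz (- x) = (qz x)^-1. Proof. by rewrite /qz invr_expz. Qed.
Lemma qz1 : qz 1 = qC. Proof. by rewrite /qz expr1z. Qed.
Lemma qz_gt0 x : 0 < qz x. Proof. by rewrite /qz exprz_gt0 // qC_gt0. Qed.
Lemma qz_neq0 x : qz x != 0. Proof. by rewrite gt_eqF // qz_gt0. Qed.

Definition opg (g : gen) (f : Fn) : Fn :=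
  match g with
  | Dl => fun a b c d => f (a - 1) b c d
  | Dli => fun a b c d => f (a + 1) b c d
  | G11 => fun a b c d => f a (b - 1) c d
  | G12 => fun a b c d => qz (b - a) * f a b (c - 1) d
  | G21 => fun a b c d => qz (a + b) * f a b c (d - 1)
  | G22 => fun a b c d => f a (b + 1) c d + qz (b + b + 1) * f a (b + 1) (c - 1) (d - 1)
  end.

Definition opw (w : seq gen) (f : Fn) : Fn := foldr opg f w.

Definition opp (p : fpoly R) (f : Fn) : Fn :=
  fun a b c d => \sum_(t <- p) t.1 * opw t.2 f a b c d.

Definition zF : Fn := fun _ _ _ _ => 0.
Definition linF (x : C) (f g : Fn) : Fn := fun a b c d => x * f a b c d + g a b c d.

Lemma opg_lin g x f1 f2 : opg g (linF x f1 f2) = linF x (opg g f1) (opg g f2).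
Proof.
by do 4 apply: functional_extensionality => ?; case: g; rewrite /linF /=; ring.
Qed.

Lemma opg_zero g : opg g zF = zF.
Proof.
by do 4 apply: functional_extensionality => ?; case: g; rewrite /zF /=; ring.
Qed.

Lemma opw_lin w x f1 f2 : opw w (linF x f1 f2) = linF x (opw w f1) (opw w f2).
Proof. by elim: w => //= g w ->; rewrite opg_lin. Qed.

Lemma opw_zero w : opw w zF = zF.
Proof. by elim: w => //= g w ->; rewrite opg_zero. Qed.

Lemma opw_sum w (I : Type) (s : seq I) (F : I -> C) (G : I -> Fn) a b c d :
  opw w (fun a b c d => \sum_(i <- s) F i * G i a b c d) a b c d
  = \sum_(i <- s) F i * opw w (G i) a b c d.
Proof.
elim: s => [|i s IH].
  have -> : (fun a b c d => \sum_(i <- [::]) F i * G i a b c d) = zF.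
    by do 4 apply: functional_extensionality => ?; rewrite big_nil.
  by rewrite opw_zero big_nil.
have -> : (fun a b c d => \sum_(j <- i :: s) F j * G j a b c d) =
  linF (F i) (G i) (fun a b c d => \sum_(j <- s) F j * G j a b c d).
  by do 4 apply: functional_extensionality => ?; rewrite big_cons.
by rewrite opw_lin /linF IH big_cons.
Qed.

Lemma opw_cat u v f : opw (u ++ v) f = opw u (opw v f).
Proof. by rewrite /opw foldr_cat. Qed.

Lemma opp_ceq p r : ceq p r -> opp p = opp r.
Proof.
move=> e; apply: functional_extensionality => f.
do 4 apply: functional_extensionality => ?.
rewrite /opp; apply: (sum_ceq (F := fun c w => c * opw w f _ _ _ _)) => //.
  by move=> w x y; rewrite mulrDl.
by move=> w; rewrite mul0r.
Qed.

Lemma opp_cat p r f a b c d : opp (p ++ r) f a b c d = opp p f a b c d + opp r f a b c d.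
Proof. by rewrite /opp big_cat. Qed.

Lemma opp_nil f a b c d : opp [::] f a b c d = 0.
Proof. by rewrite /opp big_nil. Qed.

Lemma opp_scale x p f a b c d : opp (scalep x p) f a b c d = x * opp p f a b c d.
Proof.
by rewrite /opp /scalep big_map mulr_sumr; apply: eq_bigr => t _ /=; rewrite mulrA.
Qed.

Lemma opp_flatten l f a b c d : opp (flatten l) f a b c d = \sum_(p <- l) opp p f a b c d.
Proof. by rewrite /opp big_flatten. Qed.

Lemma opp_mul p r f : opp (mulp p r) f = opp p (opp r f).
Proof.
do 4 apply: functional_extensionality => ?.
rewrite /opp /mulp big_allpairs_dep /=; apply: eq_bigr => t _.
rewrite opw_sum mulr_sumr; apply: eq_bigr => u _.
by rewrite opw_cat mulrA.
Qed.


Lemma qCE : qC = q%:C. Proof. by []. Qed.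

Ltac relt := do 4 apply: functional_extensionality => ?;
  rewrite /opp /zF /= !big_cons big_nil /= ?subrK ?addrK ?(qzD, qzN) ?qz1 ?qCE;
  rewrite ?mul1r ?mulr1 ?mulN1r ?mulrN1 ?addr0;
  field; rewrite ?qz_neq0 -?qCE ?qC_neq0.

Lemma opp_rels i f : opp (nth [::] (rels q) i) f = zF.
Proof.
case: i => [|i]; first by relt.
case: i => [|i]; first by relt.
case: i => [|i]; first by relt.
case: i => [|i]; first by relt.
case: i => [|i]; first by relt.
case: i => [|i]; first by relt.
case: i => [|i]; first by relt.
case: i => [|i]; first by relt.
case: i => [|i]; first by relt.
case: i => [|i]; first by relt.
case: i => [|i]; first by relt.
case: i => [|i]; first by relt.
case: i => [|i]; first by relt.
do 4 apply: functional_extensionality => ?.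
by rewrite nth_default ?opp_nil.
Qed.


Lemma opp_zF p : opp p zF = zF.
Proof.
do 4 apply: functional_extensionality => ?.
rewrite /opp big1 // => t _; by rewrite opw_zero /zF mulr0.
Qed.

Lemma opp_inI p f : inI q p -> opp p f = zF.
Proof.
move=> [s h]; rewrite (opp_ceq h).
do 4 apply: functional_extensionality => ?.
rewrite opp_flatten big_map big1 // => t _.
by rewrite !opp_mul opp_rels opp_zF.
Qed.

Notation cj := (@Num.conj _).
Lemma conjcM (x y : C) : cj (x * y) = cj x * cj y. Proof. exact: rmorphM. Qed.
Lemma conjcD (x y : C) : cj (x + y) = cj x + cj y. Proof. exact: rmorphD. Qed.
Lemma conjcN (x : C) : cj (- x) = - cj x. Proof. exact: rmorphN. Qed.
Lemma conjc0' : cj (0 : C) = 0. Proof. exact: rmorph0. Qed.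
Lemma conjc1' : cj (1 : C) = 1. Proof. exact: rmorph1. Qed.
Lemma conjcV (x : C) : cj (x^-1) = (cj x)^-1. Proof. exact: fmorphV. Qed.
Lemma conjcR (x : R) : cj (x%:C) = x%:C. Proof. exact: conjc_real. Qed.

Definition dsgn (w : seq gen) : C := (-1) ^+ count gsign w.
Definition dword (w : seq gen) := rev (map gdag w).

Lemma coef_dagger p w :
  coef (dagger p) w = \sum_(t <- p) (if dword t.2 == w then dsgn t.2 * cj t.1 else 0).
Proof. by rewrite /coef /dagger big_map. Qed.

Lemma ceq_dagger p r : ceq p r -> ceq (dagger p) (dagger r).
Proof.
move=> e w; rewrite !coef_dagger.
apply: (sum_ceq (F := fun c u => if dword u == w then dsgn u * cj c else 0)) => //.
  by move=> u x y /=; case: ifP => _; rewrite ?addr0 // -mulrDr; congr (_ * _); exact: rmorphD.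
by move=> u; case: ifP => // _; rewrite -[RHS](mulr0 (dsgn u)); congr (_ * _); exact: rmorph0.
Qed.

Lemma opp_dagger_mul p r f : opp (dagger (mulp p r)) f = opp (dagger r) (opp (dagger p) f).
Proof.
do 4 apply: functional_extensionality => ?.
rewrite /opp /dagger /mulp !big_map big_allpairs_dep /= exchange_big /=.
apply: eq_bigr => y _; rewrite opw_sum big_map mulr_sumr; apply: eq_bigr => x _ /=.
rewrite map_cat rev_cat opw_cat count_cat exprD conjcM.
rewrite !mulrA; congr (_ * _); ring.
Qed.

Lemma opp_dagger_cat p r f a b c d :
  opp (dagger (p ++ r)) f a b c d = opp (dagger p) f a b c d + opp (dagger r) f a b c d.
Proof. by rewrite /dagger map_cat opp_cat. Qed.

Lemma opp_dagger_scale x p f a b c d :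
  opp (dagger (scalep x p)) f a b c d = cj x * opp (dagger p) f a b c d.
Proof.
rewrite /opp /dagger /scalep -map_comp !big_map mulr_sumr; apply: eq_bigr => t _ /=.
by rewrite conjcM; ring.
Qed.

Lemma opp_dagger_flatten l f a b c d :
  opp (dagger (flatten l)) f a b c d = \sum_(p <- l) opp (dagger p) f a b c d.
Proof. by rewrite /dagger map_flatten opp_flatten big_map. Qed.

Lemma opp_dagger_rels i f : opp (dagger (nth [::] (rels q) i)) f = zF.
Proof.
Ltac relt2 := do 4 apply: functional_extensionality => ?;
  rewrite /opp /zF /dagger /= !big_cons big_nil /= ?subrK ?addrK ?(qzD, qzN) ?qz1 ?qCE;
  rewrite ?add0n ?addn0 ?exprD ?expr1 ?expr0 ?(conjcM, conjcN, conjc1', conjcV, conjcR);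
  rewrite ?mul1r ?mulr1 ?mulN1r ?mulrN1 ?addr0;
  field; rewrite ?qz_neq0 -?qCE ?qC_neq0.
do 13 (case: i => [|i]; first by relt2).
do 4 apply: functional_extensionality => ?.
by rewrite nth_default ?opp_nil.
Qed.

Lemma opp_dagger_inI p f : inI q p -> opp (dagger p) f = zF.
Proof.
move=> [s h]; rewrite (opp_ceq (ceq_dagger h)).
do 4 apply: functional_extensionality => ?.
rewrite opp_dagger_flatten big_map big1 // => t _.
by rewrite !opp_dagger_mul opp_dagger_rels opp_zF.
Qed.

End Rep.


Section Red.
Variable R : realType.
Local Notation C := (R[i]).
Variable q : R.
Hypothesis hq : 0 < q.
Implicit Types (p r : fpoly R).

Definition mon (c : C) (w : seq gen) : fpoly R := [:: (c, w)].

Lemma ceq_auto p r :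
  foldr (fun w P => coef p w = coef r w /\ P) True (undup (map snd (p ++ r))) -> ceq p r.
Proof.
move=> h w.
case: (boolP (w \in undup (map snd (p ++ r)))) => [wi|wn].
  elim: (undup _) wi h => // x s IH; rewrite inE => /orP [/eqP -> [] //| ws [] _].
  exact: IH.
have z : forall p', {subset map snd p' <= map snd (p ++ r)} -> coef p' w = 0.
  move=> p' sub; rewrite /coef big_seq big1 // => t tp; case: ifP => // /eqP e.
  by case/negP: wn; rewrite mem_undup -e; apply: sub; apply: map_f.
rewrite !z // => x xi; rewrite map_cat mem_cat xi ?orbT //.
Qed.

Ltac ceqt := apply: ceq_auto; rewrite /= /coef !big_cons !big_nil /=;
  rewrite ?mul1r ?mulr1 ?mulN1r ?mulrN1 ?addr0 ?add0r; repeat split; ring.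

Goal ceq (mon 1 [:: Dl; G11] ++ mon 2 [:: Dl; G12] ++ mon 3 [:: Dl; G11]) (mon 4 [:: Dl; G11] ++ mon 2 [:: Dl; G12]).
ceqt.
Qed.

Definition sq : C := (Num.sqrt q)%:C.
Definition xc (k : 'I_4) : C :=
  match val k with 0 => 1 * 1 | 1 => sq^-1 * (1 * 1) | 2 => sq * (1 * 1) | _ => 1 * 1 end.
Definition xg (k : 'I_4) : seq gen :=
  match val k with 0 => [:: Dl; G11] | 1 => [:: Dl; G12] | 2 => [:: Dl; G21] | _ => [:: Dl; G22] end.

Lemma xgenE k : xgen q k = mon (xc k) (xg k).
Proof. by case: k => [[|[|[|[|]]]] ?]. Qed.

Definition X1 (w : seq 'I_4) : fpoly R := prodp (map (xgen q) w).
Definition cw (w : seq 'I_4) : C := foldr (fun k c => xc k * c) 1 w.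
Definition gw (w : seq 'I_4) : seq gen := flatten (map xg w).

Lemma X1E w : X1 w = mon (cw w) (gw w).
Proof. by elim: w => //= k w IH; rewrite /X1 /= -/(X1 w) IH xgenE. Qed.

Lemma cw_cat u v : cw (u ++ v) = cw u * cw v.
Proof. by elim: u => /= [|k u ->]; rewrite ?mul1r ?mulrA. Qed.

Lemma gw_cat u v : gw (u ++ v) = gw u ++ gw v.
Proof. by rewrite /gw map_cat flatten_cat. Qed.

Lemma mulp_mon_l a u p : mulp (mon a u) p = [seq (a * t.1, u ++ t.2) | t <- p].
Proof. by rewrite /mulp /= cats0. Qed.

Lemma mulp_mon_r a u p : mulp p (mon a u) = [seq (t.1 * a, t.2 ++ u) | t <- p].
Proof. by elim: p => //= t p IH; rewrite /mulp /= in IH *; rewrite IH. Qed.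

Lemma X1_cat u v : X1 (u ++ v) = mulp (X1 u) (X1 v).
Proof. by rewrite !X1E /mon /mulp /= cw_cat gw_cat. Qed.

Lemma xembedE P : xembed q P = [seq (t.1 * cw t.2, gw t.2) | t <- P].
Proof. by elim: P => //= t P IH; rewrite /xembed /= -/(xembed q P) IH -/(X1 t.2) X1E. Qed.


Lemma ctx u l v (c : C) P :
  aeq q (mon 1 l) P -> aeq q (mon c (u ++ l ++ v)) [seq (c * t.1, u ++ t.2 ++ v) | t <- P].
Proof.
move=> h.
have := aeq_scale c (aeq_mull (mon 1 u) (aeq_mulr (mon 1 v) h)).
rewrite !mulp_mon_r !mulp_mon_l /scalep -!map_comp /= => h2.
apply: (aeq_ceql _ (aeq_ceqr _ h2)) => w.
  by rewrite /coef !big_cons !big_nil /= !mulr1.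
by congr coef; apply: eq_map => t /=; rewrite !mulr1 mul1r.
Qed.

Lemma step u l v (c : C) P P' :
  aeq q (mon 1 l) P -> ceq [seq (c * t.1, u ++ t.2 ++ v) | t <- P] P' ->
  aeq q (mon c (u ++ l ++ v)) P'.
Proof. by move=> h e; apply: (aeq_ceqr (ceq_sym e)); apply: ctx. Qed.

Local Notation D := Dl.
Local Notation A := G11.
Local Notation B := G12.
Local Notation Cc := G21.
Local Notation Dd := G22.

Lemma mon_scale c1 c2 w : mon c1 w = scalep c1 (mon c2 w) -> True. Proof. by []. Qed.

Lemma aeq_mon_inv (c : C) l1 l2 : c != 0 ->
  aeq q (mon 1 l1) (mon c l2) -> aeq q (mon 1 l2) (mon c^-1 l1).
Proof.
move=> c0 h; have := aeq_sym (aeq_scale c^-1 h); rewrite /scalep /= => h2.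
apply: (aeq_ceql _ (aeq_ceqr _ h2)) => w; by rewrite /coef !big_cons !big_nil /= ?mulVf // ?mulr1.
Qed.

Lemma qC_neq0' : q%:C != 0 :> C. Proof. exact: (qC_neq0 hq). Qed.

Ltac brel k := apply: (inI_ceq _ (inI_rel q k)); ceqt.

Lemma r0 : aeq q (mon 1 [:: A; B]) (mon (q%:C^-1) [:: B; A]). Proof. brel 0%N. Qed.
Lemma r1 : aeq q (mon 1 [:: A; Cc]) (mon (q%:C^-1) [:: Cc; A]). Proof. brel 1%N. Qed.
Lemma r2 : aeq q (mon 1 [:: B; Dd]) (mon (q%:C^-1) [:: Dd; B]). Proof. brel 2%N. Qed.
Lemma r3 : aeq q (mon 1 [:: Cc; Dd]) (mon (q%:C^-1) [:: Dd; Cc]). Proof. brel 3%N. Qed.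
Lemma r4 : aeq q (mon 1 [:: B; Cc]) (mon 1 [:: Cc; B]). Proof. brel 4%N. Qed.
Lemma r5 : aeq q (mon 1 [:: A; Dd]) (mon (q%:C^-1) [:: B; Cc] ++ mon 1 [::]). Proof. brel 5%N. Qed.
Lemma r6 : aeq q (mon 1 [:: Dd; A]) (mon (q%:C) [:: Cc; B] ++ mon 1 [::]). Proof. brel 6%N. Qed.
Lemma r7 : aeq q (mon 1 [:: D; A]) (mon 1 [:: A; D]). Proof. brel 7%N. Qed.
Lemma r8 : aeq q (mon 1 [:: D; B]) (mon (q%:C) [:: B; D]). Proof. brel 8%N. Qed.
Lemma r9 : aeq q (mon 1 [:: D; Cc]) (mon (q%:C^-1) [:: Cc; D]). Proof. brel 9%N. Qed.
Lemma r10 : aeq q (mon 1 [:: D; Dd]) (mon 1 [:: Dd; D]). Proof. brel 10%N. Qed.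

Lemma sA : aeq q (mon 1 [:: A; D]) (mon 1 [:: D; A]).
Proof. by apply: aeq_ceqr (aeq_mon_inv (oner_neq0 _) r7) => w; rewrite invr1. Qed.
Lemma sB : aeq q (mon 1 [:: B; D]) (mon (q%:C^-1) [:: D; B]).
Proof. exact: (aeq_mon_inv qC_neq0' r8). Qed.
Lemma sCc : aeq q (mon 1 [:: Cc; D]) (mon (q%:C) [:: D; Cc]).
Proof.
apply: aeq_ceqr (aeq_mon_inv _ r9); first by move=> w; rewrite invrK.
by rewrite invr_eq0 qC_neq0'.
Qed.
Lemma sDd : aeq q (mon 1 [:: Dd; D]) (mon 1 [:: D; Dd]).
Proof. by apply: aeq_ceqr (aeq_mon_inv (oner_neq0 _) r10) => w; rewrite invr1. Qed.
Lemma sCcB : aeq q (mon 1 [:: Cc; B]) (mon 1 [:: B; Cc]).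
Proof. by apply: aeq_ceqr (aeq_mon_inv (oner_neq0 _) r4) => w; rewrite invr1. Qed.

Lemma tstep u l v (c : C) P rest N :
  aeq q (mon 1 l) P -> aeq q ([seq (c * t.1, u ++ t.2 ++ v) | t <- P] ++ rest) N ->
  aeq q ((c, u ++ l ++ v) :: rest) N.
Proof.
move=> h1 h2; apply: aeq_trans h2.
exact: (aeq_cat (ctx u v c h1) (aeq_refl q rest)).
Qed.

Lemma trot t rest N : aeq q (rest ++ [:: t]) N -> aeq q (t :: rest) N.
Proof.
by apply: aeq_ceql => w; rewrite coef_cat !coef_cons coef_nil addr0 addrC.
Qed.

Lemma tfin p N : ceq p N -> aeq q p N.
Proof. exact: aeq_ceq. Qed.

Definition o0 : 'I_4 := @Ordinal 4 0 isT.
Definition o1 : 'I_4 := @Ordinal 4 1 isT.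
Definition o2 : 'I_4 := @Ordinal 4 2 isT.
Definition o3 : 'I_4 := @Ordinal 4 3 isT.

Lemma x10 : aeq q (X1 [:: o1; o0]) (xembed q [:: (1, [:: o0; o1])]).
Proof.
rewrite X1E xembedE /cw /gw /xc /=.
apply: (aeq_trans (r := mon (sq^-1 / q%:C) [:: D; D; B; A])).
  apply: (tstep (u := [:: D]) (v := [:: A]) sB) => /=.
  apply: tfin; ceqt.
apply: aeq_sym.
apply: (tstep (u := [:: D]) (v := [:: B]) sA) => /=.
apply: (tstep (u := [:: D; D]) (v := [::]) r0) => /=.
apply: tfin; ceqt.
Qed.

Lemma sq_gt0 : 0 < sq. Proof. by rewrite /sq ltcR sqrtr_gt0. Qed.
Lemma sq_neq0 : sq != 0. Proof. by rewrite gt_eqF // sq_gt0. Qed.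

Ltac ceqf := apply: ceq_auto; rewrite /= /coef !big_cons !big_nil /=;
  rewrite ?mul1r ?mulr1 ?mulN1r ?mulrN1 ?addr0 ?add0r; repeat split;
  field; rewrite ?sq_neq0 ?qC_neq0' //.

Lemma x20 : aeq q (X1 [:: o2; o0]) (xembed q [:: (q%:C ^+ 2, [:: o0; o2])]).
Proof.
rewrite X1E xembedE /cw /gw /xc /=.
apply: (aeq_trans (r := mon (sq * q%:C) [:: D; D; Cc; A])).
  apply: (tstep (u := [:: D]) (v := [:: A]) sCc) => /=.
  apply: tfin; ceqf.
apply: aeq_sym.
apply: (tstep (u := [:: D]) (v := [:: Cc]) sA) => /=.
apply: (tstep (u := [:: D; D]) (v := [::]) r1) => /=.
apply: tfin; ceqf.
Qed.

Lemma x30 : aeq q (X1 [:: o3; o0])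
  (xembed q [:: (1, [:: o0; o3]); (q%:C ^+ 2 - 1, [:: o1; o2])]).
Proof.
rewrite X1E xembedE /cw /gw /xc /=.
apply: (aeq_trans (r := mon (q%:C) [:: D; D; B; Cc] ++ mon 1 [:: D; D])).
  apply: (tstep (u := [:: D]) (v := [:: A]) sDd) => /=.
  apply: (tstep (u := [:: D; D]) (v := [::]) r6) => /=.
  apply: (tstep (u := [:: D; D]) (v := [::]) sCcB) => /=.
  apply: tfin; ceqf.
apply: aeq_sym.
apply: (tstep (u := [:: D]) (v := [:: Dd]) sA) => /=.
apply: (tstep (u := [:: D; D]) (v := [::]) r5) => /=.
apply: trot; apply: trot => /=.
apply: (tstep (u := [:: D]) (v := [:: Cc]) sB) => /=.
apply: tfin; ceqf.
Qed.

Lemma x21 : aeq q (X1 [:: o2; o1]) (xembed q [:: (q%:C ^+ 2, [:: o1; o2])]).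
Proof.
rewrite X1E xembedE /cw /gw /xc /=.
apply: (aeq_trans (r := mon (q%:C) [:: D; D; B; Cc])).
  apply: (tstep (u := [:: D]) (v := [:: B]) sCc) => /=.
  apply: (tstep (u := [:: D; D]) (v := [::]) sCcB) => /=.
  apply: tfin; ceqf.
apply: aeq_sym.
apply: (tstep (u := [:: D]) (v := [:: Cc]) sB) => /=.
apply: tfin; ceqf.
Qed.

Lemma x31 : aeq q (X1 [:: o3; o1]) (xembed q [:: (q%:C ^+ 2, [:: o1; o3])]).
Proof.
rewrite X1E xembedE /cw /gw /xc /=.
apply: (aeq_trans (r := mon (sq^-1) [:: D; D; Dd; B])).
  apply: (tstep (u := [:: D]) (v := [:: B]) sDd) => /=.
  apply: tfin; ceqf.
apply: aeq_sym.
apply: (tstep (u := [:: D]) (v := [:: Dd]) sB) => /=.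
apply: (tstep (u := [:: D; D]) (v := [::]) r2) => /=.
apply: tfin; ceqf.
Qed.

Lemma x32 : aeq q (X1 [:: o3; o2]) (xembed q [:: (1, [:: o2; o3])]).
Proof.
rewrite X1E xembedE /cw /gw /xc /=.
apply: (aeq_trans (r := mon sq [:: D; D; Dd; Cc])).
  apply: (tstep (u := [:: D]) (v := [:: Cc]) sDd) => /=.
  apply: tfin; ceqf.
apply: aeq_sym.
apply: (tstep (u := [:: D]) (v := [:: Dd]) sCc) => /=.
apply: (tstep (u := [:: D; D]) (v := [::]) r3) => /=.
apply: tfin; ceqf.
Qed.

Definition le4 : rel 'I_4 := fun x y => (val x <= val y)%N.
Definition rk (w : seq 'I_4) : nat := foldl (fun n k => n * 4 + val k)%N 0%N w.

Lemma foldl_rk n w : foldl (fun n k => n * 4 + val k)%N n w = (n * 4 ^ size w + rk w)%N.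
Proof.
rewrite /rk; elim: w n => [|k w IH] n /=; first by rewrite muln1 addn0.
by rewrite IH [in RHS]IH mul0n add0n expnS mulnDl addnA mulnA.
Qed.

Lemma rk_ctx u v s s' : size s = 2%N -> size s' = 2%N -> (rk s < rk s')%N ->
  (rk (u ++ s ++ v) < rk (u ++ s' ++ v))%N.
Proof.
move=> h1 h2 lt; rewrite /rk !foldl_cat -/(rk u) !foldl_rk h1 h2.
rewrite ltn_add2r ltn_pmul2r ?expn_gt0 // ltn_add2l //.
Qed.

Lemma descent w : ~~ sorted le4 w ->
  exists u y x v, w = u ++ [:: y; x] ++ v /\ (val x < val y)%N.
Proof.
elim: w => // a [|b w] IH //= /nandP [nab|np].
  by exists [::], a, b, w; split => //; rewrite ltnNge.
have [u [y [x [v [e lt]]]]] := IH np.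
by exists (a :: u), y, x, v; rewrite e.
Qed.

Lemma desc_rel (y x : 'I_4) : (val x < val y)%N ->
  exists P : xpoly R, aeq q (X1 [:: y; x]) (xembed q P) /\
    forall t, t \in P -> size t.2 = 2%N /\ (rk t.2 < rk [:: y; x])%N.
Proof.
have E : forall k : 'I_4, k = o0 \/ k = o1 \/ k = o2 \/ k = o3.
  by case => [[|[|[|[|//]]]] ?]; [left|right;left|right;right;left|right;right;right]; apply: val_inj.
case: (E y) => [->|[->|[->|->]]]; case: (E x) => [->|[->|[->|->]]] //= _.
- by exists [:: (1, [:: o0; o1])]; split; [exact: x10| move=> t; rewrite inE => /eqP ->].
- by exists [:: (q%:C ^+ 2, [:: o0; o2])]; split; [exact: x20| move=> t; rewrite inE => /eqP ->].
- by exists [:: (q%:C ^+ 2, [:: o1; o2])]; split; [exact: x21| move=> t; rewrite inE => /eqP ->].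
- exists [:: (1, [:: o0; o3]); (q%:C ^+ 2 - 1, [:: o1; o2])]; split; first exact: x30.
  by move=> t; rewrite !inE => /orP [] /eqP ->.
- by exists [:: (q%:C ^+ 2, [:: o1; o3])]; split; [exact: x31| move=> t; rewrite inE => /eqP ->].
- by exists [:: (1, [:: o2; o3])]; split; [exact: x32| move=> t; rewrite inE => /eqP ->].
Qed.

Lemma ctxX u l v P : aeq q (X1 l) (xembed q P) ->
  aeq q (X1 (u ++ l ++ v)) (xembed q [seq (t.1, u ++ t.2 ++ v) | t <- P]).
Proof.
move=> h; rewrite !X1_cat.
apply: aeq_trans; first exact: (aeq_mull (X1 u) (aeq_mulr (X1 v) h)).
apply: aeq_ceq => w; congr coef.
rewrite !X1E !xembedE mulp_mon_r mulp_mon_l -!map_comp; apply: eq_map => t /=.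
by rewrite !cw_cat !gw_cat; congr (_, _); ring.
Qed.

Definition Red (w : seq 'I_4) := exists P : xpoly R,
  (forall t, t \in P -> sorted le4 t.2) /\ aeq q (X1 w) (xembed q P).

Lemma xembed_cat P P' : xembed q (P ++ P') = xembed q P ++ xembed q P'.
Proof. by rewrite /xembed map_cat flatten_cat. Qed.

Lemma RedL (L : xpoly R) : (forall t, t \in L -> Red t.2) ->
  exists P : xpoly R, (forall t, t \in P -> sorted le4 t.2) /\ aeq q (xembed q L) (xembed q P).
Proof.
elim: L => [|[c w] L IH] h; first by exists [::]; split => //; exact: aeq_refl.
have [P [sP eP]] := h (c, w) (mem_head _ _).
have [P' [sP' eP']] := IH (fun t tL => h t (mem_behead (s := (c, w) :: L) tL)).
exists ([seq (c * t.1, t.2) | t <- P] ++ P'); split.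
  by move=> t; rewrite mem_cat => /orP [/mapP [t' t'P ->] /=|]; [exact: sP| exact: sP'].
rewrite xembed_cat; have -> : xembed q ((c, w) :: L) = scalep c (X1 w) ++ xembed q L by [].
apply: aeq_cat eP'; apply: aeq_trans (aeq_scale c eP) _.
apply: aeq_ceq => u; congr coef; rewrite !xembedE /scalep -!map_comp; apply: eq_map => t /=.
by rewrite mulrA.
Qed.

Lemma red_all w : Red w.
Proof.
suff : forall n w, (rk w < n)%N -> Red w by apply; exact: ltnSn.
elim=> [//|n IH] {}w hw.
case: (boolP (sorted le4 w)) => [sw|nsw].
  exists [:: (1, w)]; split; first by move=> t; rewrite inE => /eqP ->.
  by apply: aeq_ceq => u; congr coef; rewrite X1E xembedE /= mul1r.
have [u [y [x [v [ew lt]]]]] := descent nsw; subst w.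
have [P [eP hP]] := desc_rel lt.
have [P' [sP' eP']] : exists P' : xpoly R, (forall t, t \in P' -> sorted le4 t.2) /\
    aeq q (xembed q [seq (t.1, u ++ t.2 ++ v) | t <- P]) (xembed q P').
  apply: RedL => t /mapP [t0 t0P ->] /=; apply: IH.
  have [s2 r2] := hP t0 t0P.
  by apply: leq_trans (rk_ctx u v (s' := [:: y; x]) s2 (erefl _) r2) _; rewrite -ltnS.
by exists P'; split => //; apply: aeq_trans (ctxX u v eP) eP'.
Qed.

End Red.


Section Cone.
Variable R : realType.
Local Notation C := (R[i]).
Variable q : R.
Hypothesis hq : 0 < q.

Definition Cone (f : Fn R) (b1 b2 b3 b4 : int) (v : C) :=
  f b1 b2 b3 b4 = v /\ forall m1 m2 m3 m4, f m1 m2 m3 m4 != 0 ->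
    [/\ m1 = b1, m2 = b2 & exists r : nat, m3 = b3 + r%:Z /\ m4 = b4 + r%:Z].

Definition sh1 (g : gen) : int := match g with Dl => 1 | Dli => -1 | _ => 0 end.
Definition sh2 (g : gen) : int := match g with G11 => 1 | G22 => -1 | _ => 0 end.
Definition sh3 (g : gen) : int := match g with G12 => 1 | _ => 0 end.
Definition sh4 (g : gen) : int := match g with G21 => 1 | _ => 0 end.

Lemma cone_opg g f b1 b2 b3 b4 v : Cone f b1 b2 b3 b4 v -> 0 < v ->
  exists2 v', 0 < v' & Cone (opg q g f) (b1 + sh1 g) (b2 + sh2 g) (b3 + sh3 g) (b4 + sh4 g) v'.
Proof.
move=> [fb supp] v0; case: g => /=; rewrite ?addr0.
- exists v => //; split; first by rewrite addrK.
  move=> m1 m2 m3 m4 /supp [e1 e2 e3]; split => //; lia.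
- exists (qz q (b2 - b1) * v); first by rewrite mulr_gt0 // qz_gt0.
  split; first by rewrite addrK fb.
  move=> m1 m2 m3 m4; rewrite mulf_eq0 negb_or => /andP [_ /supp [e1 e2 [r [e3 e4]]]].
  by split => //; exists r; split => //; lia.
- exists (qz q (b1 + b2) * v); first by rewrite mulr_gt0 // qz_gt0.
  split; first by rewrite addrK fb.
  move=> m1 m2 m3 m4; rewrite mulf_eq0 negb_or => /andP [_ /supp [e1 e2 [r [e3 e4]]]].
  by split => //; exists r; split => //; lia.
- exists v => //; split.
    rewrite subrK fb.
    have -> : f b1 b2 (b3 - 1) (b4 - 1) = 0.
      apply/eqP; apply: contraT => /supp [_ _ [r [e3 _]]]; lia.
    by rewrite mulr0 addr0.
  move=> m1 m2 m3 m4 h.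
  have : f m1 (m2 + 1) m3 m4 != 0 \/ f m1 (m2 + 1) (m3 - 1) (m4 - 1) != 0.
    case: (boolP (f m1 (m2 + 1) m3 m4 == 0)) => [/eqP e|]; last by left.
    by right; move: h; rewrite e add0r mulf_eq0 negb_or => /andP [].
  case=> /supp [e1 e2 [r [e3 e4]]]; split => //; try lia.
    by exists r; split; lia.
  by exists r.+1; split; lia.
- exists v => //; split; first by rewrite addrK.
  move=> m1 m2 m3 m4 /supp [e1 e2 e3]; split => //; lia.
- exists v => //; split; first by rewrite subrK.
  move=> m1 m2 m3 m4 /supp [e1 e2 e3]; split => //; lia.
Qed.


Definition shw1 (w : seq gen) : int := \sum_(g <- w) sh1 g.
Definition shw2 (w : seq gen) : int := \sum_(g <- w) sh2 g.
Definition shw3 (w : seq gen) : int := \sum_(g <- w) sh3 g.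
Definition shw4 (w : seq gen) : int := \sum_(g <- w) sh4 g.

Lemma cone_opw w f b1 b2 b3 b4 v : Cone f b1 b2 b3 b4 v -> 0 < v ->
  exists2 v', 0 < v' &
    Cone (opw q w f) (b1 + shw1 w) (b2 + shw2 w) (b3 + shw3 w) (b4 + shw4 w) v'.
Proof.
move=> h v0; elim: w => [|g w [v' v'0 IH]].
  by exists v => //; rewrite /shw1 /shw2 /shw3 /shw4 !big_nil !addr0.
have [v'' v''0 h'] := cone_opg g IH v'0.
exists v'' => //; rewrite /shw1 /shw2 /shw3 /shw4 !big_cons.
by rewrite !addrA ![_ + sh1 g + _]addrAC ![_ + sh2 g + _]addrAC ![_ + sh3 g + _]addrAC ![_ + sh4 g + _]addrAC.
Qed.

Definition delta0 : Fn R := fun a b c d => if (a == 0) && (b == 0) && (c == 0) && (d == 0) then 1 else 0.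

Lemma cone_delta0 : Cone delta0 0 0 0 0 1.
Proof.
split; first by rewrite /delta0 eqxx.
move=> m1 m2 m3 m4; rewrite /delta0.
case: (m1 =P 0) => [->|_]; last by rewrite /= eqxx.
case: (m2 =P 0) => [->|_]; last by rewrite /= eqxx.
case: (m3 =P 0) => [->|_]; last by rewrite /= eqxx.
case: (m4 =P 0) => [->|_]; last by rewrite /= eqxx.
by split => //; exists 0%N.
Qed.

End Cone.

Section Counts.

Definition cnt (k : 'I_4) (w : seq 'I_4) : nat := count_mem k w.

Lemma ordE (k : 'I_4) : k = o0 \/ k = o1 \/ k = o2 \/ k = o3.
Proof.
by case: k => [[|[|[|[|//]]]] ?]; [left|right;left|right;right;left|right;right;right]; apply: val_inj.
Qed.

Lemma size_cnt w : size w = (cnt o0 w + cnt o1 w + cnt o2 w + cnt o3 w)%N.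
Proof.
elim: w => //= k w ->; rewrite /cnt /=.
by case: (ordE k) => [->|[->|[->|->]]] /=; rewrite ?add0n ?add1n; lia.
Qed.

Lemma shw_gw w :
  [/\ shw1 (gw w) = (size w)%:Z, shw2 (gw w) = (cnt o0 w)%:Z - (cnt o3 w)%:Z,
      shw3 (gw w) = (cnt o1 w)%:Z & shw4 (gw w) = (cnt o2 w)%:Z].
Proof.
elim: w => [|k w [e1 e2 e3 e4]]; first by rewrite /shw1 /shw2 /shw3 /shw4 /gw /= !big_nil.
have -> : gw (k :: w) = xg k ++ gw w by [].
rewrite /shw1 /shw2 /shw3 /shw4 in e1 e2 e3 e4 *.
rewrite !big_cat e1 e2 e3 e4 /cnt /=.
case: (ordE k) => [->|[->|[->|->]]]; rewrite /= !big_cons !big_nil /=; split; lia.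
Qed.

Lemma shw_dword g :
  [/\ shw1 (dword g) = shw1 g, shw2 (dword g) = - shw2 g,
      shw3 (dword g) = shw4 g & shw4 (dword g) = shw3 g].
Proof.
rewrite /shw1 /shw2 /shw3 /shw4 /dword !big_rev !big_map; split.
- by apply: eq_bigr; case.
- by rewrite -sumrN; apply: eq_bigr; case.
- by apply: eq_bigr; case.
- by apply: eq_bigr; case.
Qed.

Lemma count_gsign_gw w : count gsign (gw w) = (cnt o1 w + cnt o2 w)%N.
Proof.
elim: w => //= k w IH; have -> : gw (k :: w) = xg k ++ gw w by [].
rewrite count_cat IH /cnt /=.
by case: (ordE k) => [->|[->|[->|->]]] /=; lia.
Qed.

Lemma cnt_eq_sorted w w' : sorted le4 w -> sorted le4 w' ->
  cnt o0 w = cnt o0 w' -> cnt o1 w = cnt o1 w' -> cnt o2 w = cnt o2 w' -> cnt o3 w = cnt o3 w' ->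
  w = w'.
Proof.
move=> s1 s2 e0 e1 e2 e3; apply: (sorted_eq _ _ s1 s2).
- by move=> x y z; rewrite /le4; apply: leq_trans.
- by move=> x y /andP [h1 h2]; apply: val_inj; apply/eqP; rewrite eqn_leq; apply/andP.
apply/allP => k _; rewrite /=; by case: (ordE k) => [->|[->|[->|->]]]; apply/eqP.
Qed.

End Counts.

Section Theta.
Variable R : realType.
Local Notation C := (R[i]).
Variable q : R.
Hypothesis hq : 0 < q.
Local Notation cj := (@Num.conj _).

Lemma Cone_eq (f : Fn R) b1 b2 b3 b4 b1' b2' b3' b4' v :
  b1 = b1' -> b2 = b2' -> b3 = b3' -> b4 = b4' -> Cone f b1 b2 b3 b4 v -> Cone f b1' b2' b3' b4' v.
Proof. by move=> -> -> -> ->. Qed.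

Definition th (N t : nat) (w w' : seq 'I_4) : C :=
  opp q (mulp (dagger (X1 q w)) (X1 q w')) (@delta0 R) (N + N)%N%:Z 0 t%:Z t%:Z.

Lemma opg_scal g x (f : Fn R) : opg q g (fun a b c d => x * f a b c d) = fun a b c d => x * opg q g f a b c d.
Proof. by do 4 apply: functional_extensionality => ?; case: g => /=; ring. Qed.

Lemma opw_scal w x (f : Fn R) : opw q w (fun a b c d => x * f a b c d) = fun a b c d => x * opw q w f a b c d.
Proof. by elim: w => //= g w ->; rewrite opg_scal. Qed.

Lemma opp_mon c g (f : Fn R) a b c' d : opp q (mon c g) f a b c' d = c * opw q g f a b c' d.
Proof. by rewrite /opp big_cons big_nil addr0. Qed.

Lemma thE N t w w' : th N t w w' =
  dsgn R (gw w) * cj (cw q w) * cw q w' * opw q (dword (gw w) ++ gw w') (@delta0 R) (N + N)%N%:Z 0 t%:Z t%:Z.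
Proof.
rewrite /th opp_mul !X1E.
have -> : dagger (mon (cw q w) (gw w)) = mon (dsgn R (gw w) * cj (cw q w)) (dword (gw w)) by [].
rewrite opp_mon.
have -> : opp q (mon (cw q w') (gw w')) (@delta0 R) = fun a b c d => cw q w' * opw q (gw w') (@delta0 R) a b c d.
  by do 4 apply: functional_extensionality => ?; rewrite opp_mon.
by rewrite opw_scal opw_cat mulrA.
Qed.

Lemma cone_th w w' : exists2 v, 0 < v & Cone (opw q (dword (gw w) ++ gw w') (@delta0 R))
  ((size w + size w')%N%:Z) ((cnt o0 w')%:Z - (cnt o3 w')%:Z - ((cnt o0 w)%:Z - (cnt o3 w)%:Z))
  ((cnt o2 w + cnt o1 w')%N%:Z) ((cnt o1 w + cnt o2 w')%N%:Z) v.
Proof.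
have [v v0 h] := cone_opw hq (dword (gw w) ++ gw w') (cone_delta0 R) ltr01.
exists v => //; move: h.
have [a1 a2 a3 a4] := shw_dword (gw w).
have [b1 b2 b3 b4] := shw_gw w.
have [c1 c2 c3 c4] := shw_gw w'.
rewrite /shw1 /shw2 /shw3 /shw4 in a1 a2 a3 a4 b1 b2 b3 b4 c1 c2 c3 c4 *.
rewrite !big_cat a1 a2 a3 a4 b1 b2 b3 b4 c1 c2 c3 c4 !add0r.
apply: Cone_eq => /=; lia.
Qed.

Lemma th_zero N t w w' : sorted le4 w -> sorted le4 w' ->
  (size w <= N)%N -> (size w' <= N)%N ->
  (size w = N -> t <= cnt o1 w + cnt o2 w)%N -> (size w' = N -> t <= cnt o1 w' + cnt o2 w')%N ->
  th N t w w' != 0 -> [/\ w = w', size w = N & (cnt o1 w + cnt o2 w)%N = t].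
Proof.
move=> s1 s2 l1 l2 h1 h2; rewrite thE mulf_eq0 negb_or => /andP [_ nz].
have [v _ [_ supp]] := cone_th w w'.
have [e1 e2 [r [e3 e4]]] := supp _ _ _ _ nz.
have S1 := size_cnt w; have S2 := size_cnt w'.
have eN : size w = N /\ size w' = N by lia.
case: eN => eN eN'.
have := h1 eN; have := h2 eN' => t1 t2.
have E1 : cnt o1 w = cnt o1 w' by lia.
have E2 : cnt o2 w = cnt o2 w' by lia.
have E0 : cnt o0 w = cnt o0 w' by lia.
have E3 : cnt o3 w = cnt o3 w' by lia.
split => //; last by lia.
exact: cnt_eq_sorted.
Qed.

Lemma cw_gt0 w : 0 < cw q w.
Proof.
elim: w => [|k w IH]; first exact: ltr01.
rewrite /= mulr_gt0 // /xc.
have sq0 := sq_gt0 hq.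
by case: (ordE k) => [->|[->|[->|->]]]; rewrite /= ?mulr1 ?mul1r ?ltr01 ?invr_gt0.
Qed.

Lemma th_diag N t w : size w = N -> (cnt o1 w + cnt o2 w)%N = t -> 0 < (-1) ^+ t * th N t w w.
Proof.
move=> eN et; rewrite thE /dsgn count_gsign_gw et.
have [v v0 [hv _]] := cone_th w w.
have -> : opw q (dword (gw w) ++ gw w) (@delta0 R) (N + N)%N%:Z 0 t%:Z t%:Z = v.
  rewrite -hv; congr opw; rewrite ?eN ?subrr //; lia.
rewrite !mulrA -exprD addnn -mul2n exprM sqrrN expr1n expr1n mul1r.
by rewrite mulr_gt0 // mulrC mul_conjC_gt0 gt_eqF // cw_gt0.
Qed.

End Theta.


Section Main.
Variable R : realType.
Local Notation C := (R[i]).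
Local Notation cj := (@Num.conj _).
Variable q : R.
Hypothesis hq : 0 < q.
Variable U : vectType C.
Variable form : U -> U -> C.
Hypothesis hform : hermitian_inner_product form.

Lemma conjcE (x : C) : conjc x = cj x. Proof. rewrite /Num.conj /=. reflexivity. Qed.

Lemma formDr u v w : form u (v + w) = form u v + form u w.
Proof. by case: hform => _ h _ _; rewrite -{1}[v]scale1r h mul1r. Qed.
Lemma formZr u c v : form u (c *: v) = c * form u v.
Proof.
case: hform => _ h _ _.
have z : form u 0 = 0.
  have e := formDr u 0 0; rewrite addr0 in e.
  by apply: (addrI (form u 0)); rewrite addr0 -e.
by rewrite -[c *: v]addr0 h z addr0.
Qed.
Lemma formDl u v w : form (u + v) w = form u w + form v w.
Proof. by case: hform => h _ _ _; rewrite -{1}[u]scale1r h rmorph1 mul1r. Qed.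
Lemma formZl c u v : form (c *: u) v = cj c * form u v.
Proof.
case: hform => h _ _ _.
have z : form 0 v = 0.
  have e := formDl 0 0 v; rewrite addr0 in e.
  by apply: (addrI (form 0 v)); rewrite addr0 -e.
by rewrite -[c *: u]addr0 h z addr0.
Qed.
Lemma form0l v : form 0 v = 0.
Proof. by rewrite -(scale0r 0) formZl rmorph0 mul0r. Qed.
Lemma form0r u : form u 0 = 0.
Proof. by rewrite -(scale0r 0) formZr mul0r. Qed.
Lemma form_gt0 u : u != 0 -> 0 < form u u.
Proof. by case: hform => _ _ _ h; apply: h. Qed.

Definition phiL (u : U) : {linear U -> C^o} :=
 (HB.pack_for {linear U -> C^o} (form u)
   (GRing.isLinear.Build _ _ _ _ (form u) (fun a v w => etrans (formDr _ _ _) (congr1 (fun x => x + _) (formZr _ _ _))))).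


Definition contr (phi : U -> C) (s : seq (U * xpoly R)) : fpoly R :=
  flatten [seq scalep (phi t.1) (xembed q t.2) | t <- s].

Lemma inI_flatten (L : seq (fpoly R)) : (forall x, x \in L -> inI q x) -> inI q (flatten L).
Proof.
elim: L => [|x L IH] h /=; first by apply: inI_zero => w; rewrite coef_nil.
apply: inI_cat; first exact: h (mem_head _ _).
by apply: IH => y yL; apply: h; rewrite inE yL orbT.
Qed.

Lemma tpair_ceq (s : seq (U * xpoly R)) :
  ceq (tpair q form s) (flatten [seq mulp (dagger (xembed q a.2)) (contr (form a.1) s) | a <- s]).
Proof.
move=> w; rewrite /tpair coef_flatten big_allpairs_dep coef_flatten big_map.
apply: eq_bigr => a _; rewrite ceq_mul_flatten_r coef_flatten !big_map.
by apply: eq_bigr => b _; rewrite ceq_mul_scale_l ceq_mul_scale_r !coef_scale.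
Qed.

Lemma backward (s : seq (U * xpoly R)) : tensor_zero q s -> aeq q (tpair q form s) [::].
Proof.
move=> tz; apply/aeq_inI; apply: (inI_ceq (tpair_ceq s)).
apply: inI_flatten => x /mapP [a _ ->]; apply: inI_mull.
have := tz (phiL a.1); move/aeq_inI; apply.
Qed.


Lemma opp_aeq p p' : aeq q p p' -> opp q p = opp q p'.
Proof.
move=> h; apply: functional_extensionality => f.
apply: functional_extensionality => x1; apply: functional_extensionality => x2.
apply: functional_extensionality => x3; apply: functional_extensionality => x4.
have := congr1 (fun g => g x1 x2 x3 x4) (opp_inI hq f h).
rewrite /subp /= opp_cat opp_scale /zF => /eqP.
by rewrite mulN1r subr_eq0 => /eqP.
Qed.

Lemma oppd_aeq p p' : aeq q p p' -> opp q (dagger p) = opp q (dagger p').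
Proof.
move=> h; apply: functional_extensionality => f.
apply: functional_extensionality => x1; apply: functional_extensionality => x2.
apply: functional_extensionality => x3; apply: functional_extensionality => x4.
have := congr1 (fun g => g x1 x2 x3 x4) (opp_dagger_inI hq f h).
rewrite /subp /= opp_dagger_cat opp_dagger_scale /zF => /eqP.
by rewrite rmorphN1 mulN1r subr_eq0 => /eqP.
Qed.

Lemma opp_tpair (s : seq (U * xpoly R)) f a b c d :
  opp q (tpair q form s) f a b c d =
  \sum_(x <- s) \sum_(y <- s) form x.1 y.1 * opp q (dagger (xembed q x.2)) (opp q (xembed q y.2) f) a b c d.
Proof.
rewrite /tpair opp_flatten big_allpairs_dep; apply: eq_bigr => x _; apply: eq_bigr => y _.
by rewrite opp_mul opp_scale.
Qed.

Definition Hs (t : U * xpoly R) := (t.1, opp q (xembed q t.2), opp q (dagger (xembed q t.2))).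

Lemma opp_tpairH (s : seq (U * xpoly R)) f a b c d :
  opp q (tpair q form s) f a b c d =
  \sum_(x <- map Hs s) \sum_(y <- map Hs s) form x.1.1 y.1.1 * x.2 (y.1.2 f) a b c d.
Proof. by rewrite opp_tpair big_map; apply: eq_bigr => x _; rewrite big_map. Qed.

Definition sortedP (P : xpoly R) := forall t, t \in P -> sorted le4 t.2.

Lemma red_sigma (s : seq (U * xpoly R)) : exists s' : seq (U * xpoly R),
  [/\ forall t, t \in s' -> sortedP t.2, map Hs s = map Hs s' &
      forall phi : U -> C, aeq q (contr phi s) (contr phi s')].
Proof.
elim: s => [|[u P] s [s' [h1 h2 h3]]].
  by exists [::]; split => // phi; exact: aeq_refl.
have [P' [sP' eP']] := RedL (L := P) (fun t _ => red_all hq t.2).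
exists ((u, P') :: s'); split.
- by move=> t; rewrite inE => /orP [/eqP -> //| /h1].
- by rewrite /= h2 /Hs /= (opp_aeq eP') (oppd_aeq eP').
- by move=> phi; apply: aeq_cat; [apply: aeq_scale| exact: h3].
Qed.


Lemma group_sum (V0 : zmodType) (W : eqType) (Z : zmodType) (Q : seq (V0 * W)) (F : V0 -> W -> Z) :
  (forall w, {morph F^~ w : x y / x + y}) -> (forall w, F 0 w = 0) ->
  \sum_(x <- Q) F x.1 x.2 = \sum_(w <- undup (map snd Q)) F (\sum_(x <- Q | x.2 == w) x.1) w.
Proof.
move=> FD F0.
transitivity (\sum_(w <- undup (map snd Q)) \sum_(x <- Q) (if x.2 == w then F x.1 w else 0)); last first.
  by apply: eq_bigr => w _; rewrite (big_morph (F^~ w) (FD w) (F0 w)) [RHS]big_mkcond.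
rewrite exchange_big /= [LHS]big_seq [RHS]big_seq; apply: eq_bigr => x xQ.
have xS : x.2 \in undup (map snd Q) by rewrite mem_undup; apply: map_f.
rewrite (bigD1_seq x.2) ?undup_uniq //= eqxx big1 ?addr0 // => w /negbTE nw.
by rewrite eq_sym nw.
Qed.

Definition Qs (s : seq (U * xpoly R)) : seq (U * seq 'I_4) :=
  flatten [seq [seq (x.1 *: t.1, x.2) | x <- t.2] | t <- s].

Lemma coef_contr (phi : {linear U -> C^o}) s w :
  coef (contr phi s) w = \sum_(x <- Qs s) phi x.1 * coef (X1 q x.2) w.
Proof.
rewrite /contr /Qs coef_flatten big_flatten !big_map; apply: eq_bigr => t _.
rewrite coef_scale /xembed coef_flatten !big_map mulr_sumr; apply: eq_bigr => x _.
by rewrite coef_scale linearZ /= /GRing.scale /= mulrA [phi t.1 * _]mulrC.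
Qed.

Lemma opp_xembed P (f : Fn R) :
  opp q (xembed q P) f = fun a b c d => \sum_(y <- P) y.1 * opp q (X1 q y.2) f a b c d.
Proof.
do 4 apply: functional_extensionality => ?.
by rewrite /xembed opp_flatten big_map; apply: eq_bigr => y _; rewrite opp_scale.
Qed.

Lemma opp_sumf p (I : Type) (r : seq I) (k : I -> C) (F : I -> Fn R) a b c d :
  opp q p (fun a b c d => \sum_(i <- r) k i * F i a b c d) a b c d =
  \sum_(i <- r) k i * opp q p (F i) a b c d.
Proof.
rewrite /opp; under eq_bigr do rewrite opw_sum mulr_sumr.
rewrite exchange_big /=; apply: eq_bigr => i _; rewrite mulr_sumr.
by apply: eq_bigr => t _; rewrite mulrCA.
Qed.

Lemma oppd_xembed P (g : Fn R) a b c d :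
  opp q (dagger (xembed q P)) g a b c d = \sum_(x <- P) cj x.1 * opp q (dagger (X1 q x.2)) g a b c d.
Proof.
by rewrite /xembed opp_dagger_flatten big_map; apply: eq_bigr => x _; rewrite opp_dagger_scale.
Qed.

Lemma theta_tpair s N t :
  opp q (tpair q form s) (delta0 R) (N + N)%N%:Z 0 t%:Z t%:Z =
  \sum_(x <- Qs s) \sum_(y <- Qs s) form x.1 y.1 * th q N t x.2 y.2.
Proof.
rewrite opp_tpair /Qs big_flatten big_map; apply: eq_bigr => a _.
rewrite big_map.
under [RHS]eq_bigr => x _ do rewrite big_flatten big_map.
rewrite [RHS]exchange_big /=; apply: eq_bigr => b _.
rewrite oppd_xembed mulr_sumr; apply: eq_bigr => x _.
rewrite big_map opp_xembed opp_sumf !mulr_sumr; apply: eq_bigr => y _ /=.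
rewrite formZl formZr /th opp_mul.
ring.
Qed.

Lemma forward_core s : (forall t, t \in s -> sortedP t.2) ->
  (forall N t, opp q (tpair q form s) (delta0 R) (N + N)%N%:Z 0 t%:Z t%:Z = 0) ->
  forall phi : {linear U -> C^o}, aeq q (contr phi s) [::].
Proof.
move=> hs h0 phi.
pose Q := Qs s; pose S := undup (map snd Q).
pose V w := \sum_(x <- Q | x.2 == w) x.1.
have sS : forall w, w \in S -> sorted le4 w.
  move=> w; rewrite mem_undup => /mapP [x xQ ->].
  move: xQ; rewrite /Q /Qs => /flattenP [l /mapP [t ts ->]] /mapP [y yt ->] /=.
  exact: hs t ts y yt.
case: (boolP (all (fun w => V w == 0) S)) => [allz|].
  apply/aeq_inI; apply: inI_zero => g.
  rewrite coef_contr (@group_sum _ _ _ _ (fun u w => phi u * coef (X1 q w) g)).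
  - rewrite big_seq big1 // => w wS; move/allP: allz => /(_ w wS) /eqP.
    by rewrite /V => ->; rewrite linear0 mul0r.
  - by move=> w x y; rewrite linearD mulrDl.
  - by move=> w; rewrite linear0 mul0r.
move/allPn => [w0 w0S nz0].
pose PN := fun n => has (fun w => (V w != 0) && (size w == n)) S.
have exN : exists n, PN n by exists (size w0); apply/hasP; exists w0 => //; rewrite nz0 eqxx.
have ubN : forall n, PN n -> (n <= \max_(w <- S) size w)%N.
  by move=> n /hasP [w wS /andP [_ /eqP <-]]; apply: (leq_bigmax_seq (P := xpredT)).
case: (ex_maxnP exN ubN) => N PNN maxN.
have hN : forall w, w \in S -> V w != 0 -> (size w <= N)%N.
  by move=> w wS nz; apply: maxN; apply/hasP; exists w => //; rewrite nz eqxx.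
have [w1 w1S /andP [nz1 /eqP sz1]] := hasP PNN.
pose PT := fun n => has (fun w => (V w != 0) && (size w == N) && (cnt o1 w + cnt o2 w == n)%N) S.
have exT : exists n, PT n.
  by exists (cnt o1 w1 + cnt o2 w1)%N; apply/hasP; exists w1 => //; rewrite nz1 sz1 !eqxx.
case: (ex_minnP exT) => t PTt minT.
have ht : forall w, w \in S -> V w != 0 -> size w = N -> (t <= cnt o1 w + cnt o2 w)%N.
  by move=> w wS nz sz; apply: minT; apply/hasP; exists w => //; rewrite nz sz !eqxx.
have [w2 w2S /andP [/andP [nz2 /eqP sz2] /eqP ct2]] := hasP PTt.
have := h0 N t; rewrite theta_tpair.
have inner : forall (x : U * seq 'I_4), \sum_(y <- Q) form x.1 y.1 * th q N t x.2 y.2 =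
    \sum_(w' <- S) form x.1 (V w') * th q N t x.2 w'.
  move=> x; rewrite (@group_sum _ _ _ _ (fun u w' => form x.1 u * th q N t x.2 w')) //.
    by move=> w' u v; rewrite /= formDr mulrDl.
  by move=> w'; rewrite /= form0r mul0r.
under eq_bigr => x _ do rewrite inner.
rewrite (@group_sum _ _ _ _ (fun u w => \sum_(w' <- S) form u (V w') * th q N t w w')); first last.
- by move=> w; rewrite big1 // => w' _; rewrite form0l mul0r.
- by move=> w u v; rewrite /= -big_split /=; apply: eq_bigr => w' _; rewrite formDl mulrDl.
rewrite -/S.
pose cond w := (V w != 0) && (size w == N) && (cnt o1 w + cnt o2 w == t)%N.
have diag : forall w, w \in S -> \sum_(w' <- S) form (V w) (V w') * th q N t w w' =
    if cond w then form (V w) (V w) * th q N t w w else 0.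
  move=> w wS.
  rewrite (bigD1_seq w) ?undup_uniq //= big_seq_cond big1 ?addr0; last first.
    move=> w' /andP [w'S nw'].
    case: (eqVneq (V w) 0) => [->|nzw]; first by rewrite form0l mul0r.
    case: (eqVneq (V w') 0) => [->|nzw']; first by rewrite form0r mul0r.
    case: (eqVneq (th q N t w w') 0) => [->|nth]; first by rewrite mulr0.
    have [e _ _] := th_zero hq (sS w wS) (sS w' w'S) (hN w wS nzw) (hN w' w'S nzw')
      (ht w wS nzw) (ht w' w'S nzw') nth.
    by rewrite e eqxx in nw'.
  case: ifP => // /negbT ncond.
  case: (eqVneq (V w) 0) => [->|nzw]; first by rewrite form0l mul0r.
  case: (eqVneq (th q N t w w) 0) => [->|nth]; first by rewrite mulr0.
  have [_ e1 e2] := th_zero hq (sS w wS) (sS w wS) (hN w wS nzw) (hN w wS nzw)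
      (ht w wS nzw) (ht w wS nzw) nth.
  by rewrite /cond nzw e1 e2 !eqxx in ncond.
rewrite big_seq (eq_bigr _ diag) -big_seq => hsum.
have pos : 0 < (-1) ^+ t * \sum_(w <- S) (if cond w then form (V w) (V w) * th q N t w w else 0).
  rewrite mulr_sumr (bigD1_seq w2) ?undup_uniq //=.
  have c2 : cond w2 by rewrite /cond nz2 sz2 ct2 !eqxx.
  rewrite c2; apply: ltr_wpDr; last by rewrite mulrCA mulr_gt0 ?form_gt0 // th_diag.
  rewrite sumr_ge0 // => w _; case: ifP => [/andP [/andP [nzw /eqP szw] /eqP cw]|]; last by rewrite mulr0.
  by rewrite ltW // mulrCA mulr_gt0 ?form_gt0 // th_diag.
by rewrite hsum mulr0 ltxx in pos.
Qed.

End Main.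

Theorem proposition3p4 (R : realType) (q : R) (hq : 0 < q)
    (U : vectType (R[i])) (form : U -> U -> R[i])
    (hform : hermitian_inner_product form)
    (sigma : seq (U * xpoly R)) :
  aeq q (tpair q form sigma) [::] <-> tensor_zero q sigma.
Proof.
split; last exact: backward.
move=> h phi.
have [s' [hs hH hc]] := red_sigma hq sigma.
apply: aeq_trans (hc phi) _.
apply: (forward_core hq hform hs) => N t.
have := opp_inI hq (delta0 R) ((aeq_inI _ _).1 h).
move/(congr1 (fun g => g (N + N)%N%:Z 0 t%:Z t%:Z)).
by rewrite opp_tpairH hH -opp_tpairH.
Qed.
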